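(* Let $\epsilon:B\to A$ be a local augmentation. (a) If $\alpha,\beta$ are invertible $n\times n$ matrices over $B$ with $\epsilon(\alpha)=\epsilon(\beta)$ the identity matrix, then $D(\alpha\beta)=D(\alpha)D(\beta)$ in $\epsilon^{-1}(1)/C_0$. (b) If $\alpha$ is an $m\times n$ matrix and $\beta$ an $n\times m$ matrix over $B$ (i.e. $\alpha:B^n\to B^m$, $\beta:B^m\to B^n$) and $\epsilon(\alpha)=0$ or $\epsilon(\beta)=0$ (or both), then $D(1+\alpha\beta)=D(1+\beta\alpha)$ in $\epsilon^{-1}(1)/C_0$.
   Context: Rings are associative with $1$. A local augmentation is a ring homomorphism $\epsilon:B\to A$ with a ring homomorphism $j:A\to B$, $\epsilon j=\mathrm{id}_A$, such that every square matrix over $B$ whose image under $\epsilon$ is invertible is itself invertible; $\epsilon$ is applied to matrices entrywise. Under the hypothesis of (b), $1+\alpha\beta$ and $1+\beta\alpha$ are invertible with $\epsilon$-image the identity. $C_0$ is the subgroup of units of $B$ generated by $\{(1+ab)(1+ba)^{-1}\mid a,b\in B,\ \epsilon(a)=0\}$; it is a normal subgroup of $\epsilon^{-1}(1)$ with abelian quotient. For an invertible $k\times k$ matrix $\gamma$ over $B$ with $\epsilon(\gamma)$ the identity, $D(\gamma)\in\epsilon^{-1}(1)/C_0$ is defined recursively: if $k=1$, $D(\gamma)$ is the class of $\gamma$; if $k\ge2$, write $\gamma=\begin{pmatrix}\gamma_{11}&\gamma_{12}\\ \gamma_{21}&\gamma_{22}\end{pmatrix}$ with $\gamma_{11}$ of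 size $1\times1$ (invertible since $\epsilon(\gamma_{11})=1$) and set $D(\gamma)=\gamma_{11}D(\gamma_{22}-\gamma_{21}\gamma_{11}^{-1}\gamma_{12})$. *)

(* Defs.v *)
From HB Require Import structures.
From mathcomp Require Import all_boot all_order all_algebra.
Set Implicit Arguments. Unset Strict Implicit. Unset Printing Implicit Defensive.
Import GRing.Theory.
Local Open Scope ring_scope.

Definition mx_invertible (R : pzRingType) (k : nat) (M : 'M[R]_k) : Prop :=
  exists N : 'M[R]_k, M *m N = 1%:M /\ N *m M = 1%:M.

Definition local_augmentation (B : unitRingType) (A : nzRingType)
    (eps : {rmorphism B -> A}) : Prop :=
  (exists j : {rmorphism A -> B}, forall a : A, eps (j a) = a) /\
  (forall (k : nat) (M : 'M[B]_k),
      mx_invertible (map_mx eps M) -> mx_invertible M).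

(* C_0 : subgroup of units of B generated by (1+ab)(1+ba)^{-1}, eps a = 0.
   Membership = being a finite word in generators and their inverses. *)
Inductive C0 (B : unitRingType) (A : nzRingType) (eps : {rmorphism B -> A})
  : B -> Prop :=
  | C0_one : C0 eps 1
  | C0_gen : forall a b x, eps a = 0 -> C0 eps x ->
      C0 eps ((1 + a * b) * (1 + b * a)^-1 * x)
  | C0_genV : forall a b x, eps a = 0 -> C0 eps x ->
      C0 eps (((1 + a * b) * (1 + b * a)^-1)^-1 * x).

(* Equality of classes in eps^{-1}(1)/C_0 of two elements of eps^{-1}(1). *)
Definition eqC0 (B : unitRingType) (A : nzRingType) (eps : {rmorphism B -> A})
    (x y : B) : Prop := C0 eps (x * y^-1).

Definition schur (B : unitRingType) (k : nat) (g : 'M[B]_k.+1) : 'M[B]_k :=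
  \matrix_(i, j) (g (lift ord0 i) (lift ord0 j)
                  - g (lift ord0 i) ord0 * (g ord0 ord0)^-1 * g ord0 (lift ord0 j)).

(* Representative of D(g): D(g) = g11 * D(schur g), D of a 1x1 matrix is its
   entry (the k = 0 base case only serves the recursion). *)
Fixpoint Drep (B : unitRingType) (k : nat) : 'M[B]_k -> B :=
  match k return 'M[B]_k -> B with
  | 0 => fun _ => 1
  | k'.+1 => fun g => g ord0 ord0 * Drep (schur g)
  end.

(* Main.v *)
Require Import Defs.
From HB Require Import structures.
From mathcomp Require Import all_boot all_order all_algebra.
Import GRing.Theory.
Local Open Scope ring_scope.

Lemma ac1 (V : zmodType) (a b c d e : V) : a + b + (c + d) - (a + c + (b + e)) = d - e.
Proof.
by rewrite (addrACA a b c d) opprD (addrACA (a + c)) subrr add0r opprD addrACA subrr add0r.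
Qed.

Lemma scD (R : pzRingType) n (a b : R) : ((a + b)%:M : 'M[R]_n) = a%:M + b%:M.
Proof. by apply/matrixP => i j; rewrite !mxE mulrnDl. Qed.

Lemma scB (R : pzRingType) n (a b : R) : ((a - b)%:M : 'M[R]_n) = a%:M - b%:M.
Proof. by apply/matrixP => i j; rewrite !mxE mulrnBl. Qed.

Section Loc.
Variables (B : unitRingType) (A : nzRingType) (eps : {rmorphism B -> A}).
Hypothesis hloc : local_augmentation eps.

Definition U1 (x : B) := eps x = 1.

Lemma U1_unit {x} : U1 x -> x \is a GRing.unit.
Proof.
move=> hx; have [N [h1 h2]] : mx_invertible (x%:M : 'M[B]_1).
  apply: hloc.2; rewrite map_scalar_mx /= hx; exists 1%:M; by rewrite mul1mx.
apply/GRing.unitrP; exists (N 0 0); split.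
  by move/matrixP: h2 => /(_ 0 0); rewrite !mxE big_ord1 !mxE /= mulr1n.
by move/matrixP: h1 => /(_ 0 0); rewrite !mxE big_ord1 !mxE /= mulr1n.
Qed.

Lemma U1V x : U1 x -> U1 x^-1.
Proof.
move=> hx; rewrite /U1 -[eps x^-1]mulr1 -[X in _ * X = _]hx -rmorphM mulVr ?rmorph1 //.
exact: U1_unit.
Qed.

Lemma U1M x y : U1 x -> U1 y -> U1 (x * y).
Proof. by move=> hx hy; rewrite /U1 rmorphM hx hy mulr1. Qed.

Lemma U11 : U1 1.
Proof. exact: rmorph1. Qed.

Lemma U1_1p a b : eps a = 0 \/ eps b = 0 -> U1 (1 + a * b).
Proof. by move=> h; rewrite /U1 rmorphD rmorph1 rmorphM; case: h => ->; rewrite ?mul0r ?mulr0 addr0. Qed.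

Local Notation C := (C0 eps).

Lemma C_U1 {x} : C x -> U1 x.
Proof.
elim=> [|a b y ha _ hy|a b y ha _ hy]; first exact: U11.
  apply: U1M => //; apply: U1M; first by apply: U1_1p; left.
  by apply: U1V; apply: U1_1p; right.
apply: U1M => //; apply: U1V; apply: U1M; first by apply: U1_1p; left.
by apply: U1V; apply: U1_1p; right.
Qed.

Lemma C_mul {x y} : C x -> C y -> C (x * y).
Proof.
elim=> [|a b z ha _ IH|a b z ha _ IH] hy; first by rewrite mul1r.
  by rewrite -mulrA; apply: C0_gen => //; apply: IH.
by rewrite -mulrA; apply: C0_genV => //; apply: IH.
Qed.

Lemma C_gen a b : eps a = 0 -> C ((1 + a * b) * (1 + b * a)^-1).
Proof. by move=> ha; rewrite -[X in C X]mulr1; apply: C0_gen => //; apply: C0_one. Qed.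

Lemma C_genV a b : eps a = 0 -> C (((1 + a * b) * (1 + b * a)^-1)^-1).
Proof. by move=> ha; rewrite -[X in C X]mulr1; apply: C0_genV => //; apply: C0_one. Qed.

Lemma C_unit {x} : C x -> x \is a GRing.unit.
Proof. by move/C_U1/U1_unit. Qed.

Lemma C_inv {x} : C x -> C x^-1.
Proof.
elim=> [|a b z ha hz IH|a b z ha hz IH]; first by rewrite invr1; apply: C0_one.
  have hg := C_gen a b ha.
  rewrite invrM; [apply: C_mul => //; exact: C_genV | exact: C_unit hg | exact: C_unit hz].
have hg := C_genV a b ha.
rewrite invrM; [apply: C_mul => //; by rewrite invrK; apply: C_gen | exact: C_unit hg | exact: C_unit hz].
Qed.

Lemma C_comm u v : u \is a GRing.unit -> U1 v -> C (u^-1 * v * u * v^-1).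
Proof.
move=> hu hv.
have ha : eps (u^-1 * (v - 1)) = 0.
  by rewrite rmorphM rmorphB rmorph1 hv subrr mulr0.
have := C_gen _ u ha.
have -> : 1 + u^-1 * (v - 1) * u = u^-1 * v * u.
  by rewrite mulrBr mulrBl mulr1 mulVr // addrC subrK.
by rewrite mulrA divrr // mul1r addrC subrK.
Qed.

Lemma C_conj u g : u \is a GRing.unit -> C g -> C (u * g * u^-1).
Proof.
move=> hu hg.
have hgu := C_unit hg.
have hu' : u^-1 \is a GRing.unit by rewrite unitrV.
have := C_comm _ _ hu' (C_U1 hg); rewrite invrK => h.
rewrite -(divrK hgu (u * g * u^-1)); exact: C_mul.
Qed.


Local Notation "x ~ y" := (eqC0 eps x y) (at level 70).

Lemma eqC_refl x : U1 x -> x ~ x.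
Proof. by move=> hx; rewrite /eqC0 divrr ?(U1_unit hx) //; apply: C0_one. Qed.

Lemma eqC_eq x y : U1 x -> x = y -> x ~ y.
Proof. by move=> hx <-; apply: eqC_refl. Qed.

Lemma eqC_sym x y : U1 x -> U1 y -> x ~ y -> y ~ x.
Proof.
move=> hx hy h; have := C_inv h.
have ux := U1_unit hx; have uy := U1_unit hy.
by rewrite invrM ?unitrV // invrK.
Qed.

Lemma eqC_trans x y z : U1 y -> x ~ y -> y ~ z -> x ~ z.
Proof.
move=> hy h1 h2; have := C_mul h1 h2.
by rewrite /eqC0 mulrA divrK // (U1_unit hy).
Qed.

Lemma eqC_Mr x y z : U1 y -> U1 z -> x ~ y -> x * z ~ y * z.
Proof.
move=> hy hz h; rewrite /eqC0 invrM ?(U1_unit hy) ?(U1_unit hz) //.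
by rewrite mulrA mulrK // (U1_unit hz).
Qed.

Lemma eqC_Ml x y z : U1 x -> U1 y -> z \is a GRing.unit -> x ~ y -> z * x ~ z * y.
Proof.
move=> hx hy hz h; rewrite /eqC0 invrM ?(U1_unit hy) //.
rewrite mulrA -(mulrA z x); exact: C_conj.
Qed.

Lemma eqC_C x y : U1 x -> U1 y -> x * y ~ y * x.
Proof.
move=> hx hy; have hx' : x^-1 \is a GRing.unit by rewrite unitrV (U1_unit hx).
have := C_comm _ _ hx' hy; rewrite invrK.
by rewrite /eqC0 invrM ?(U1_unit hx) ?(U1_unit hy) // !mulrA.
Qed.

Lemma eqC_M x x' y y' : U1 x -> U1 x' -> U1 y -> U1 y' ->
  x ~ x' -> y ~ y' -> x * y ~ x' * y'.
Proof.
move=> hx hx' hy hy' h1 h2; apply: (@eqC_trans _ (x' * y)); first exact: U1M.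
  exact: eqC_Mr.
exact: eqC_Ml hy hy' (U1_unit hx') h2.
Qed.

Lemma eqC_g x g : U1 x -> C g -> x * g ~ x.
Proof. by move=> hx hg; rewrite /eqC0; apply: C_conj => //; exact: U1_unit. Qed.


Lemma DrepE k (g : 'M[B]_(1 + k)) :
  Drep g = g ord0 ord0 *
    Drep (drsubmx g - dlsubmx g *m ((g ord0 ord0)^-1)%:M *m ursubmx g).
Proof.
rewrite /=; congr (_ * Drep _); apply/matrixP => i j.
rewrite !mxE big_ord1 !mxE big_ord1 !mxE /= mulr1n.
have -> : lshift k (0 : 'I_1) = ord0 by apply: val_inj.
by rewrite !rshift1.
Qed.

Lemma DrepB k (a : B) (r : 'M[B]_(1, k)) (c : 'M[B]_(k, 1)) (M : 'M[B]_k) :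
  Drep (block_mx a%:M r c M : 'M_(1 + k)) = a * Drep (M - c *m (a^-1)%:M *m r).
Proof.
rewrite DrepE block_mxKdr block_mxKdl block_mxKur.
have -> : (block_mx a%:M r c M : 'M_(1 + k)) ord0 ord0 = a.
  have -> : (ord0 : 'I_(1 + k)) = lshift k ord0 by apply: val_inj.
  by rewrite block_mxEul mxE.
by [].
Qed.


Lemma sc_inv {g : B} : g \is a GRing.unit ->
  (g%:M : 'M[B]_1) *m (g^-1)%:M = 1%:M /\ ((g^-1)%:M : 'M[B]_1) *m g%:M = 1%:M.
Proof. by move=> hg; rewrite -!scalar_mxM divrr ?mulVr. Qed.

Lemma DrepLU k (x : 'M[B]_(k,1)) (y : 'M[B]_(1,k)) g r c M : g \is a GRing.unit ->
  Drep (block_mx 1%:M 0 x 1%:M *m block_mx g%:M r c M *m block_mx 1%:M y 0 1%:M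
     : 'M_(1 + k)) = Drep (block_mx g%:M r c M : 'M_(1 + k)).
Proof.
move=> hg; have [h1 h2] := sc_inv hg.
rewrite !mulmx_block !mul1mx !mul0mx !mulmx1 !mulmx0 ?addr0 ?add0r !DrepB.
congr (_ * Drep _).
have e1 n (X : 'M[B]_(n, 1)) : X *m g%:M *m (g^-1)%:M = X by rewrite -mulmxA h1 mulmx1.
have e2 n (X : 'M[B]_(n, 1)) : X *m (g^-1)%:M *m g%:M = X by rewrite -mulmxA h2 mulmx1.
rewrite !mulmxDl !mulmxDr !mulmxA !e1 !e2; exact: ac1.
Qed.


Lemma DrepDiag k (a g b : B) (S T M : 'M[B]_k) r c :
  a \is a GRing.unit -> g \is a GRing.unit -> b \is a GRing.unit ->
  Drep (block_mx a%:M 0 0 S *m block_mx g%:M r c M *m block_mx b%:M 0 0 T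
     : 'M_(1 + k)) = a * g * b * Drep (S *m (M - c *m (g^-1)%:M *m r) *m T).
Proof.
move=> ha hg hb.
rewrite !mulmx_block !mul0mx !mulmx0 ?addr0 ?add0r -!scalar_mxM DrepB.
congr (_ * Drep _).
rewrite mulmxBr mulmxBl !mulmxA; congr (_ - _); congr (_ *m _ *m _).
rewrite -!mulmxA -!scalar_mxM; congr (_ *m (_ *m _)); congr (_%:M).
have hag : a * g \is a GRing.unit by rewrite unitrMl.
rewrite invrM // invrM // !mulrA mulrV // mul1r -mulrA mulVr // mulr1 //.
Qed.


Lemma map_schur k (a : B) (r : 'M[B]_(1, k)) c (M : 'M[B]_k) :
  map_mx eps M = 1%:M -> map_mx eps c = 0 \/ map_mx eps r = 0 ->
  map_mx eps (M - c *m (a^-1)%:M *m r) = 1%:M.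
Proof.
move=> hM h; rewrite map_mxB !map_mxM hM.
by case: h => ->; rewrite ?mul0mx ?mulmx0 subr0.
Qed.

Lemma split_eps k (g : 'M[B]_(1 + k)) : map_mx eps g = 1%:M ->
  g = block_mx (g ord0 ord0)%:M (ursubmx g) (dlsubmx g) (drsubmx g) /\
  U1 (g ord0 ord0) /\ map_mx eps (ursubmx g) = 0 /\ map_mx eps (dlsubmx g) = 0 /\
  map_mx eps (drsubmx g) = 1%:M.
Proof.
move=> hg; have e0 : (ord0 : 'I_(1 + k)) = lshift k ord0 by apply: val_inj.
split.
  have -> : ((g ord0 ord0)%:M : 'M_1) = ulsubmx g.
    by rewrite [RHS]mx11_scalar !mxE; congr (_%:M); congr (g _ _); apply: val_inj.
  by rewrite submxK.
rewrite map_ursubmx map_dlsubmx map_drsubmx hg scalar_mx_block.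
rewrite block_mxKur block_mxKdl block_mxKdr; split => //.
have := congr1 (fun m : 'M_(1 + k) => m ord0 ord0) hg => /=.
by rewrite !mxE /U1 => ->.
Qed.

Arguments split_eps {k g}.

Lemma Drep_U1 k (g : 'M[B]_k) : map_mx eps g = 1%:M -> U1 (Drep g).
Proof.
elim: k g => [|k IH] g hg; first exact: U11.
have [eg [h0 [h1 [h2 h3]]]] := split_eps hg.
rewrite DrepE; apply: U1M => //; apply: IH.
by apply: map_schur => //; left.
Qed.

Arguments Drep_U1 {k g}.

Lemma decomp k (a : B) (r : 'M[B]_(1, k)) c M : a \is a GRing.unit ->
  (block_mx a%:M r c M : 'M_(1 + k)) =
  block_mx 1%:M 0 (c *m (a^-1)%:M) 1%:M *m
  block_mx a%:M 0 0 (M - c *m (a^-1)%:M *m r) *m block_mx 1%:M ((a^-1)%:M *m r) 0 1%:M.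
Proof.
move=> ha; have [h1 h2] := sc_inv ha.
rewrite !mulmx_block !mul1mx !mul0mx !mulmx1 !mulmx0 ?addr0 ?add0r.
by rewrite (mulmxA a%:M) h1 mul1mx -(mulmxA c) h2 mulmx1 mulmxA addrC subrK.
Qed.

Lemma DrepLU' k (x : 'M[B]_(k,1)) (y : 'M[B]_(1,k)) (G : 'M[B]_(1 + k)) :
  G ord0 ord0 \is a GRing.unit ->
  Drep (block_mx 1%:M 0 x 1%:M *m G *m block_mx 1%:M y 0 1%:M : 'M_(1 + k)) = Drep G.
Proof.
move=> hG; have e0 : (ord0 : 'I_(1 + k)) = lshift k ord0 by apply: val_inj.
rewrite -[G]submxK (mx11_scalar (ulsubmx G)) DrepLU //.
have e1 : lshift k (0 : 'I_1) = ord0 by apply: val_inj.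
by rewrite !mxE e1.
Qed.


Lemma entry0 m n (X : 'M[B]_(m, n)) i j : map_mx eps X = 0 -> eps (X i j) = 0.
Proof. by move/matrixP/(_ i j); rewrite !mxE. Qed.

Arguments entry0 {m n X} i j.

Lemma gen_eq x y : eps x = 0 \/ eps y = 0 -> C ((1 + x * y) * (1 + y * x)^-1).
Proof.
case=> h; first exact: C_gen.
have u1 : (1 + x * y) \is a GRing.unit by apply: U1_unit; apply: U1_1p; right.
have u2 : (1 + y * x) \is a GRing.unit by apply: U1_unit; apply: U1_1p; left.
have := C_genV y x h; rewrite invrM ?unitrV // invrK //.
Qed.

Lemma Drep1 (g : 'M[B]_1) : Drep g = g ord0 ord0.
Proof. by rewrite /= mulr1. Qed.

Definition Pk k := forall alpha beta : 'M[B]_k.+1,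
  map_mx eps alpha = 1%:M -> map_mx eps beta = 1%:M ->
  Drep (alpha *m beta) ~ Drep alpha * Drep beta.

Definition Rk k := forall (c : 'M[B]_(k.+1, 1)) (r : 'M[B]_(1, k.+1)),
  map_mx eps c = 0 \/ map_mx eps r = 0 ->
  Drep (1%:M + c *m r) ~ 1 + (r *m c) ord0 ord0.

Lemma P0 : Pk 0.
Proof.
move=> al be ha hb; rewrite !Drep1 mxE big_ord1.
apply: eqC_refl; apply: U1M.
  by have := congr1 (fun m : 'M_1 => m ord0 ord0) ha; rewrite !mxE.
by have := congr1 (fun m : 'M_1 => m ord0 ord0) hb; rewrite !mxE.
Qed.

Lemma R0 : Rk 0.
Proof.
move=> c r h; rewrite Drep1 !mxE big_ord1 /= mulr1n big_ord1 /eqC0.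
by apply: gen_eq; case: h => /(entry0 ord0 ord0) ->; [left|right].
Qed.


Lemma mapB k (a : B) (r : 'M[B]_(1, k)) c M : eps a = 1 -> map_mx eps r = 0 ->
  map_mx eps c = 0 -> map_mx eps M = 1%:M ->
  map_mx eps (block_mx a%:M r c M : 'M_(1 + k)) = 1%:M.
Proof.
by move=> ha hr hc hM; rewrite map_block_mx map_scalar_mx ha hr hc hM -scalar_mx_block.
Qed.

Lemma UL k (x : 'M[B]_(1, k)) (y : 'M[B]_(k, 1)) :
  block_mx 1%:M x 0 1%:M *m block_mx 1%:M 0 y 1%:M =
  block_mx (1 + (x *m y) ord0 ord0)%:M x y 1%:M :> 'M_(1 + k).
Proof.
rewrite mulmx_block !mul1mx !mul0mx !mulmx1 ?mulmx0 ?addr0 ?add0r.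
by rewrite scD -mx11_scalar.
Qed.

Lemma mxsE m (X : 'M[B]_(m, 1)) (a : B) i j : (X *m (a%:M : 'M_1)) i j = X i j * a.
Proof. by rewrite [LHS]mxE big_ord1 mxE (ord1 j) eqxx mulr1n. Qed.

Lemma Dt {k} : Rk k -> forall (x : 'M[B]_(1, k.+1)) (y : 'M[B]_(k.+1, 1)),
  map_mx eps y = 0 ->
  Drep (1%:M - y *m ((1 + (x *m y) ord0 ord0)^-1)%:M *m x) ~ (1 + (x *m y) ord0 ord0)^-1.
Proof.
move=> IHR x y hy.
set s := (x *m y) ord0 ord0.
have es : eps s = 0 by apply: entry0; rewrite map_mxM hy mulmx0.
have us : 1 + s \is a GRing.unit by apply: U1_unit; rewrite /U1 rmorphD rmorph1 es addr0.
have := IHR (- (y *m ((1 + s)^-1)%:M)) x.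
rewrite mulNmx -/(_ - _) => h.
have e : 1 + (x *m - (y *m ((1 + s)^-1)%:M)) ord0 ord0 = (1 + s)^-1.
  rewrite mulmxN mulmxA mxE mxsE -/s.
  by rewrite -{1}(divrr us) mulrDl mul1r addrK.
rewrite e in h; apply: h; left.
by rewrite map_mxN map_mxM hy mul0mx oppr0.
Qed.


Ltac u1 := repeat (first [assumption | apply: U1M | apply: U1V | apply: U11]).

Lemma rearr a u b d1 t d2 : U1 a -> U1 u -> U1 b -> U1 d1 -> U1 t -> U1 d2 ->
  u * t = 1 -> a * u * b * (d1 * t * d2) ~ a * d1 * (b * d2).
Proof.
move=> ha hu hb hd1 ht hd2 hut.
have s1 : b * (d1 * t * d2) ~ t * (b * (d1 * d2)).
  apply: (@eqC_trans _ (b * (t * d1 * d2))); first by u1.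
    apply: eqC_Ml; try by u1.
      exact: U1_unit.
    by apply: eqC_Mr; try u1; apply: eqC_C.
  rewrite !mulrA -(mulrA (b * t)) -(mulrA (t * b)).
  by apply: eqC_Mr; try u1; apply: eqC_C.
apply: (@eqC_trans _ (a * (b * (d1 * d2)))); first by u1.
  have -> : a * (b * (d1 * d2)) = (a * u) * (t * (b * (d1 * d2))).
    by rewrite (mulrA (a * u)) -(mulrA a) hut mulr1.
  rewrite -(mulrA (a * u)); apply: eqC_Ml; try u1; apply: U1_unit; u1.
rewrite -(mulrA a d1); apply: eqC_Ml; try u1; first exact: U1_unit.
by rewrite !mulrA; apply: eqC_Mr; try u1; apply: eqC_C.
Qed.

Lemma rearr2 g x t : U1 g -> U1 x -> U1 t -> C (g * t) -> g * x * t ~ x.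
Proof.
move=> hg hx ht hC.
apply: (@eqC_trans _ (x * g * t)); first by u1.
  by apply: eqC_Mr; try u1; apply: eqC_C.
by rewrite -mulrA; apply: eqC_g.
Qed.


Lemma Pstep k : Pk k -> Rk k -> Pk k.+1.
Proof.
move=> IHP IHR al be hal hbe.
have [eal [ha [hr [hc hM]]]] := split_eps hal.
have [ebe [hb [hr' [hc' hM']]]] := split_eps hbe.
move: (al ord0 ord0) (@ursubmx _ 1 k.+1 1 k.+1 al) (@dlsubmx _ 1 k.+1 1 k.+1 al) (@drsubmx _ 1 k.+1 1 k.+1 al) eal ha hr hc hM hal.
move=> a r c M -> ha hr hc hM hal.
move: (be ord0 ord0) (@ursubmx _ 1 k.+1 1 k.+1 be) (@dlsubmx _ 1 k.+1 1 k.+1 be) (@drsubmx _ 1 k.+1 1 k.+1 be) ebe hb hr' hc' hM' hbe.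
move=> b r' c' M' -> hb hr' hc' hM' hbe.
have ua := U1_unit ha; have ub := U1_unit hb.
rewrite !DrepB (decomp _ _ r c M ua) (decomp _ _ r' c' M' ub).
set Sa := M - c *m (a^-1)%:M *m r.
set Sb := M' - c' *m (b^-1)%:M *m r'.
set x := (a^-1)%:M *m r.
set y := c' *m (b^-1)%:M.
have hSa : map_mx eps Sa = 1%:M by apply: map_schur => //; left.
have hSb : map_mx eps Sb = 1%:M by apply: map_schur => //; left.
have hx : map_mx eps x = 0 by rewrite map_mxM hr mulmx0.
have hy : map_mx eps y = 0 by rewrite map_mxM hc' mul0mx.
set s := (x *m y) ord0 ord0.
have es : eps s = 0 by apply: entry0; rewrite map_mxM hy mulmx0.
have hs : U1 (1 + s) by rewrite /U1 rmorphD rmorph1 es addr0.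
have us := U1_unit hs.
set Da := block_mx a%:M 0 0 Sa.
set Db := block_mx b%:M 0 0 Sb.
set La := block_mx 1%:M 0 (c *m (a^-1)%:M) 1%:M.
set Ub := block_mx 1%:M ((b^-1)%:M *m r') 0 1%:M.
have -> : La *m Da *m block_mx 1%:M x 0 1%:M *m
     (block_mx 1%:M 0 y 1%:M *m Db *m Ub) =
   La *m (Da *m (block_mx 1%:M x 0 1%:M *m block_mx 1%:M 0 y 1%:M) *m Db) *m Ub.
  by rewrite !mulmxA.
rewrite DrepLU'; last first.
  apply: U1_unit.
  have hG : map_mx eps (Da *m (block_mx 1%:M x 0 1%:M *m block_mx 1%:M 0 y 1%:M) *m Db) = 1%:M.
    rewrite !map_mxM /Da /Db !mapB ?map_mx0 ?map_mx1 ?rmorph1 ?mulmx1 //.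
  by have := congr1 (fun m : 'M_(1 + k.+1) => m ord0 ord0) hG; rewrite !mxE /U1 => ->.
rewrite UL DrepDiag //.
set Z := 1%:M - y *m ((1 + (x *m y) ord0 ord0)^-1)%:M *m x.
have hZ : map_mx eps Z = 1%:M by apply: map_schur; rewrite ?map_mx1 //; left.
have hDt : Drep Z ~ (1 + s)^-1 := Dt IHR x y hy.
have hSZ : map_mx eps (Sa *m Z) = 1%:M by rewrite map_mxM hSa hZ mulmx1.
have dA := Drep_U1 hSa; have dB := Drep_U1 hSb; have dZ := Drep_U1 hZ.
have dSZ := Drep_U1 hSZ.
have hSZS : map_mx eps (Sa *m Z *m Sb) = 1%:M by rewrite map_mxM hSZ hSb mulmx1.
have dSZS := Drep_U1 hSZS.
have ht : U1 (1 + s)^-1 by apply: U1V.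
apply: (@eqC_trans _ (a * (1 + s) * b * (Drep Sa * (1 + s)^-1 * Drep Sb))); first by u1.
  apply: eqC_Ml; try u1; first by apply: U1_unit; u1.
  apply: (@eqC_trans _ (Drep (Sa *m Z) * Drep Sb)); first by u1.
    by apply: IHP.
  apply: eqC_Mr; try u1.
  apply: (@eqC_trans _ (Drep Sa * Drep Z)); first by u1.
    by apply: IHP.
  by apply: eqC_Ml; try u1; apply: U1_unit.
by apply: rearr; try u1; apply: divrr.
Qed.


Lemma key_inv (g0 p0 : B) : 1 + g0 * p0 \is a GRing.unit -> 1 + p0 * g0 \is a GRing.unit ->
  1 - p0 * (1 + g0 * p0)^-1 * g0 = (1 + p0 * g0)^-1.
Proof.
move=> u1 u2; apply: (mulrI u2); rewrite divrr // mulrBr mulr1.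
have -> : (1 + p0 * g0) * (p0 * (1 + g0 * p0)^-1 * g0) = p0 * g0.
  rewrite !mulrA.
  have -> : (1 + p0 * g0) * p0 = p0 * (1 + g0 * p0) by rewrite mulrDl mulrDr mul1r mulr1 mulrA.
  by rewrite -(mulrA p0) divrr // mulr1.
by rewrite addrK.
Qed.

Lemma Rcore {k} : Rk k -> forall (g0 p0 : B) (c' : 'M[B]_(k.+1, 1)) (r' : 'M[B]_(1, k.+1)),
  (eps g0 = 0 /\ map_mx eps c' = 0) \/ (eps p0 = 0 /\ map_mx eps r' = 0) ->
  Drep (1%:M + col_mx g0%:M c' *m row_mx p0%:M r' : 'M_(1 + k.+1))
   ~ 1 + (row_mx p0%:M r' *m col_mx g0%:M c') ord0 ord0.
Proof.
move=> IHR g0 p0 c' r' h.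
have hgp : eps g0 = 0 \/ eps p0 = 0 by case: h => [[? _]|[? _]]; [left|right].
have hgp' : eps p0 = 0 \/ eps g0 = 0 by case: hgp; [right|left].
have U1gp := U1_1p _ _ hgp; have U1pg := U1_1p _ _ hgp'.
have ugp := U1_unit U1gp; have upg := U1_unit U1pg.
rewrite mul_col_row mul_row_col (scalar_mx_block 1 k.+1) add_block_mx -scalar_mxM -scD DrepB.
rewrite !add0r.
set t := (1 + p0 * g0)^-1.
have -> : 1%:M + c' *m r' - c' *m p0%:M *m ((1 + g0 * p0)^-1)%:M *m (g0%:M *m r')
    = 1%:M + (c' *m t%:M) *m r'.
  rewrite -addrA; congr (_ + _).
  rewrite !mulmxA -(mulmxA c' p0%:M) -scalar_mxM -(mulmxA c') -scalar_mxM.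
  by rewrite /t -(key_inv g0 p0) // scB mulmxBr mulmx1 mulmxBl.
set sg := (r' *m c') ord0 ord0.
have hrc : map_mx eps (r' *m c') = 0.
  by rewrite map_mxM; case: h => [[_ ->]|[_ ->]]; rewrite ?mulmx0 ?mul0mx.
have esg : eps sg = 0 by apply: entry0.
have e1 : (p0%:M *m g0%:M + r' *m c') ord0 ord0 = p0 * g0 + sg.
  by rewrite mxE -scalar_mxM mxE /= mulr1n.
rewrite e1.
set X := 1 + (p0 * g0 + sg).
have hX : U1 X.
  by rewrite /U1 /X !rmorphD rmorph1 rmorphM esg; case: hgp => ->; rewrite ?mulr0 ?mul0r !addr0.
have ht : U1 t by apply: U1V.
have hmap : map_mx eps (c' *m t%:M) = 0 \/ map_mx eps r' = 0.
  by case: h => [[_ hc]|[_ hr]]; [left; rewrite map_mxM hc mul0mx | right].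
have hD := IHR (c' *m t%:M) r' hmap.
rewrite (mulmxA r') mxsE -/sg in hD.
have eX : 1 + sg * t = X * t by rewrite /X addrA mulrDl divrr.
rewrite eX in hD.
have hm : map_mx eps (1%:M + c' *m t%:M *m r') = 1%:M.
  rewrite map_mxD map_mx1 map_mxM; case: hmap => ->; by rewrite ?mul0mx ?mulmx0 addr0.
have dD := Drep_U1 hm.
apply: (@eqC_trans _ ((1 + g0 * p0) * (X * t))); first by u1.
  by apply: eqC_Ml; try u1.
rewrite mulrA; apply: rearr2 => //.
exact: gen_eq.
Qed.


Lemma Rstep k : Rk k -> Rk k.+1.
Proof.
move=> IHR c r h.
have ec : c = col_mx ((@usubmx _ 1 k.+1 1 c) 0 0)%:M (@dsubmx _ 1 k.+1 1 c).
  by rewrite -mx11_scalar vsubmxK.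
have er : r = row_mx ((@lsubmx _ 1 1 k.+1 r) 0 0)%:M (@rsubmx _ 1 1 k.+1 r).
  by rewrite -mx11_scalar hsubmxK.
have h' : (eps ((@usubmx _ 1 k.+1 1 c) 0 0) = 0 /\ map_mx eps (@dsubmx _ 1 k.+1 1 c) = 0) \/
          (eps ((@lsubmx _ 1 1 k.+1 r) 0 0) = 0 /\ map_mx eps (@rsubmx _ 1 1 k.+1 r) = 0).
  case: h => hc; [left|right]; split.
  - by apply: entry0; rewrite map_usubmx hc; apply/matrixP => i j; rewrite !mxE.
  - by rewrite map_dsubmx hc; apply/matrixP => i j; rewrite !mxE.
  - by apply: entry0; rewrite map_lsubmx hc; apply/matrixP => i j; rewrite !mxE.
  - by rewrite map_rsubmx hc; apply/matrixP => i j; rewrite !mxE.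
have := Rcore IHR _ _ _ _ h'.
by rewrite -ec -er.
Qed.

Lemma PR k : Pk k /\ Rk k.
Proof.
elim: k => [|k [IHP IHR]]; first by split; [exact: P0 | exact: R0].
split; [exact: Pstep | exact: Rstep].
Qed.


Lemma add1E (X : 'M[B]_1) : (1%:M + X) ord0 ord0 = 1 + X ord0 ord0.
Proof. by rewrite [LHS]mxE [1%:M _ _]mxE eqxx mulr1n. Qed.

Lemma Qb n : forall m (al : 'M[B]_(m.+1, n.+1)) (be : 'M[B]_(n.+1, m.+1)),
  map_mx eps al = 0 \/ map_mx eps be = 0 ->
  Drep (1%:M + al *m be) ~ Drep (1%:M + be *m al).
Proof.
elim: n => [|n IHn] m al be h.
  by rewrite (Drep1 (1%:M + be *m al)) add1E; apply: (PR m).2.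
have eal : al = row_mx (@lsubmx _ m.+1 1 n.+1 al) (@rsubmx _ m.+1 1 n.+1 al) by rewrite hsubmxK.
have ebe : be = col_mx (@usubmx _ 1 n.+1 m.+1 be) (@dsubmx _ 1 n.+1 m.+1 be) by rewrite vsubmxK.
have h' : (map_mx eps (@lsubmx _ m.+1 1 n.+1 al) = 0 /\ map_mx eps (@rsubmx _ m.+1 1 n.+1 al) = 0) \/
          (map_mx eps (@usubmx _ 1 n.+1 m.+1 be) = 0 /\ map_mx eps (@dsubmx _ 1 n.+1 m.+1 be) = 0).
  case: h => hc; [left|right]; split.
  - by rewrite map_lsubmx hc; apply/matrixP => i j; rewrite !mxE.
  - by rewrite map_rsubmx hc; apply/matrixP => i j; rewrite !mxE.
  - by rewrite map_usubmx hc; apply/matrixP => i j; rewrite !mxE.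
  - by rewrite map_dsubmx hc; apply/matrixP => i j; rewrite !mxE.
rewrite {}eal {}ebe; move: h'.
move: (@lsubmx _ m.+1 1 n.+1 al) (@rsubmx _ m.+1 1 n.+1 al) (@usubmx _ 1 n.+1 m.+1 be) (@dsubmx _ 1 n.+1 m.+1 be).
clear h; move=> a0 a' b0 b' h.
set sg := (b0 *m a0) ord0 ord0.
have ebs : b0 *m a0 = sg%:M by rewrite [LHS]mx11_scalar.
have hba : map_mx eps (b0 *m a0) = 0.
  by rewrite map_mxM; case: h => [[-> _]|[-> _]]; rewrite ?mulmx0 ?mul0mx.
have hab : map_mx eps (a0 *m b0) = 0.
  by rewrite map_mxM; case: h => [[-> _]|[-> _]]; rewrite ?mulmx0 ?mul0mx.
have esg : eps sg = 0 by apply: entry0.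
have hs : U1 (1 + sg) by rewrite /U1 rmorphD rmorph1 esg addr0.
have us := U1_unit hs.
set t := (1 + sg)^-1.
set W := 1%:M - a0 *m t%:M *m b0.
have F1 : (1%:M + a0 *m b0) *m W = 1%:M.
  rewrite /W mulmxBr mulmx1 !mulmxA.
  have -> : (1%:M + a0 *m b0) *m a0 = a0 *m (1 + sg)%:M.
    by rewrite mulmxDl mul1mx -mulmxA ebs scD mulmxDr mulmx1.
  by rewrite -(mulmxA a0) -scalar_mxM divrr // mulmx1 addrK.
have F2 : 1%:M + row_mx a0 a' *m col_mx b0 b' =
          (1%:M + a0 *m b0) *m (1%:M + (W *m a') *m b').
  by rewrite mul_row_col mulmxDr mulmx1 !mulmxA F1 mul1mx addrA.
have hP : map_mx eps (1%:M + a0 *m b0 : 'M_m.+1) = 1%:M by rewrite map_mxD hab map_mx1 addr0.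
have hWa : map_mx eps (W *m a') = 0 \/ map_mx eps b' = 0.
  by case: h => [[_ ha]|[_ hb]]; [left; rewrite map_mxM ha mulmx0 | right].
have hQ : map_mx eps (1%:M + W *m a' *m b') = 1%:M.
  by rewrite map_mxD map_mx1 map_mxM; case: hWa => ->; rewrite ?mul0mx ?mulmx0 addr0.
have hQ' : map_mx eps (1%:M + b' *m (W *m a')) = 1%:M.
  by rewrite map_mxD map_mx1 map_mxM; case: hWa => ->; rewrite ?mul0mx ?mulmx0 addr0.
have dP := Drep_U1 hP; have dQ := Drep_U1 hQ; have dQ' := Drep_U1 hQ'.
have ePQ : map_mx eps ((1%:M + a0 *m b0) *m (1%:M + W *m a' *m b')) = 1%:M.
  by rewrite map_mxM hP hQ mulmx1.
have dPQ := Drep_U1 ePQ.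
have hRHS : Drep (1%:M + col_mx b0 b' *m row_mx a0 a' : 'M_(1 + n.+1))
   = (1 + sg) * Drep (1%:M + b' *m (W *m a')).
  rewrite mul_col_row (scalar_mx_block 1 n.+1) add_block_mx ebs -scD DrepB.
  congr (_ * Drep _).
  by rewrite !add0r /W -/t mulmxBl mul1mx mulmxBr addrA !mulmxA.
rewrite F2 hRHS.
apply: (@eqC_trans _ (Drep (1%:M + a0 *m b0) * Drep (1%:M + W *m a' *m b'))); first by u1.
  exact: (PR m).1.
apply: eqC_M; try u1.
  have h0 : map_mx eps a0 = 0 \/ map_mx eps b0 = 0 by case: h => [[? _]|[? _]]; [left|right].
  exact: (PR m).2 a0 b0 h0.
exact: IHn.
Qed.

End Loc.


Theorem proposition4p5 (B : unitRingType) (A : nzRingType)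
    (eps : {rmorphism B -> A}) :
  local_augmentation eps ->
  (forall (n : nat) (alpha beta : 'M[B]_n.+1),
      mx_invertible alpha -> mx_invertible beta ->
      map_mx eps alpha = 1%:M -> map_mx eps beta = 1%:M ->
      eqC0 eps (Drep (alpha *m beta)) (Drep alpha * Drep beta)) /\
  (forall (m n : nat) (alpha : 'M[B]_(m.+1, n.+1)) (beta : 'M[B]_(n.+1, m.+1)),
      (map_mx eps alpha = 0 \/ map_mx eps beta = 0) ->
      eqC0 eps (Drep (1%:M + alpha *m beta)) (Drep (1%:M + beta *m alpha))).
Proof.
move=> hloc; split.
  move=> n al be _ _ ha hb; have [hP _] := @PR B A eps hloc n; exact: hP.
move=> m n al be h; exact: (@Qb B A eps hloc n m al be h).
Qed.
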